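(* Let $\lambda=(\lambda_1,\ldots,\lambda_n)\in\mathbb{C}^n$ have pairwise distinct entries and let $\hat\lambda$ be any permutation (rearrangement) of the entries of $\lambda$. Then for all $t$, $[\nu_{0,\lambda}(t),\ldots,\nu_{n-1,\lambda}(t)]=[\nu_{0,\hat\lambda}(t),\ldots,\nu_{n-1,\hat\lambda}(t)]$.
   Context: For $\lambda\in\mathbb{C}^n$ with distinct entries, $V_\lambda$ is the $n\times n$ Vandermonde matrix with $(i,j)$ entry $\lambda_j^{i-1}$, and the Vandermonde basis functions are defined by $[\nu_{0,\lambda}(t),\ldots,\nu_{n-1,\lambda}(t)]=[e^{\lambda_1 t},\ldots,e^{\lambda_n t}]\,V_\lambda^{-1}$. *)

(* Defs.v *)
From HB Require Import structures.
From mathcomp Require Import all_boot all_order all_algebra all_fingroup.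
From mathcomp Require Import all_classical all_reals all_analysis.
From mathcomp.real_closed Require Import complex.
Set Implicit Arguments. Unset Strict Implicit. Unset Printing Implicit Defensive.
Import Order.TTheory GRing.Theory Num.Theory.
Local Open Scope ring_scope.
Local Open Scope complex_scope.

Definition cexp (R : realType) (z : R[i]) : R[i] :=
  let: a +i* b := z in (expR a * cos b) +i* (expR a * sin b).

(* Vandermonde matrix V_lambda, (i,j) entry lambda_j^(i-1) (0-indexed: lambda_j^i) *)
Definition vdm (R : realType) (n : nat) (lam : 'I_n -> R[i]) : 'M[R[i]]_n :=
  \matrix_(i < n, j < n) lam j ^+ i.

(* row vector [nu_{0,lambda}(t), ..., nu_{n-1,lambda}(t)]
   = [e^{lambda_1 t}, ..., e^{lambda_n t}] V_lambda^{-1} *)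
Definition vandbasis (R : realType) (n : nat) (lam : 'I_n -> R[i]) (t : R) : 'rV[R[i]]_n :=
  (\row_(j < n) cexp (lam j * t%:C)) *m invmx (vdm lam).

(* Main.v *)
Require Import Defs.
From HB Require Import structures.
From mathcomp Require Import all_boot all_order all_algebra all_fingroup.
From mathcomp Require Import all_classical all_reals all_analysis.
From mathcomp.real_closed Require Import complex.
Local Open Scope ring_scope.
Local Open Scope complex_scope.
Import GRing.Theory.

Theorem proposition3 (R : realType) (n : nat) (lam : 'I_n -> R[i])
  (hdist : injective lam) (s : 'S_n) (t : R) :
  vandbasis lam t = vandbasis (fun j => lam (s j)) t.
Proof.
have hV : vdm lam \in unitmx.
  have -> : vdm lam = Vandermonde n (\row_j lam j).
    by apply/matrixP => i j; rewrite !mxE.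
  rewrite unitmxE det_Vandermonde unitfE.
  apply/prodf_neq0 => i _; apply/prodf_neq0 => j ij.
  rewrite !mxE subr_eq0; apply/eqP => /hdist /eqP.
  by rewrite -(inj_eq val_inj) /= => /eqP ji; move: ij; rewrite ji ltnn.
have hP : perm_mx s^-1 \in @unitmx R[i] n by apply: unitmx_perm.
rewrite /vandbasis.
have -> : vdm (fun j => lam (s j)) = vdm lam *m perm_mx s^-1.
  by rewrite -col_permE; apply/matrixP => i j; rewrite !mxE.
have -> : (\row_j cexp (lam (s j) * t%:C)) =
          (\row_j cexp (lam j * t%:C)) *m perm_mx s^-1 :> 'rV[R[i]]_n.
  by rewrite -col_permE; apply/matrixP => i j; rewrite !mxE.
set r := (\row_j cexp (lam j * t%:C)).
set V := vdm lam.
have -> : r *m perm_mx s^-1 = (r *m invmx V) *m (V *m perm_mx s^-1).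
  by rewrite mulmxA mulmxKV.
by rewrite mulmxK // unitmx_mul hV hP.
Qed.
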